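(* Let $\pi_0,\dots,\pi_{T-1}$ be a connection schedule on $[N]$ with virtual topology $G$, let $a\in[N]$, $t\in\mathbb Z$, and let $L,h$ be positive integers with $h\le L/3$. Let $k$ be the number of nodes $b\in[N]\setminus\{a\}$ for which there exists a path in $G$ from $(a,t)$ to some vertex $(b,t')$ with $t'-t\le L$ that contains at most $h$ physical edges. Then $k\le 2\binom{L}{h}$.
   Context: A connection schedule of size $N$ and period $T\ge1$ is a sequence of permutations $\pi_0,\dots,\pi_{T-1}$ of $[N]=\{1,\dots,N\}$; write $\pi_t=\pi_{t\bmod T}$ for $t\in\mathbb Z$. Its virtual topology $G$ is the directed graph on $[N]\times\mathbb Z$ with virtual edges $(i,t)\to(i,t+1)$ and physical edges $(i,t)\to(\pi_t(i),t+1)$ for all $i\in[N]$, $t\in\mathbb Z$. *)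

(* Defs.v *)
From mathcomp Require Import all_boot all_algebra all_fingroup.
From mathcomp Require Import boolp.
Set Implicit Arguments. Unset Strict Implicit. Unset Printing Implicit Defensive.
Import GRing.Theory Num.Theory.
Local Open Scope ring_scope.

(* A connection schedule of size N and period T = size s is a nonempty list
   s = [:: pi_0; ...; pi_(T-1)] of permutations of [N] (modelled as 'I_N).
   pi_t := pi_(t mod T) for t : int. *)
Definition pi_at (N : nat) (s : seq {perm 'I_N}) (t : int) : {perm 'I_N} :=
  nth 1%g s `|(t %% (size s)%:Z)%Z|%N.

Definition vertex (N : nat) := ('I_N * int)%type.

(* Out-edges of a vertex (i,t): the virtual edge (i,t) -> (i,t+1)  (label false)
   and the physical edge (i,t) -> (pi_t i, t+1)  (label true). *)
Definition edge_target (N : nat) (s : seq {perm 'I_N}) (v : vertex N) (phys : bool)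
  : vertex N :=
  if phys then (pi_at s v.2 v.1, v.2 + 1) else (v.1, v.2 + 1).

(* A path in G starting at v is determined by the sequence of edge labels it
   uses; its final vertex: *)
Definition path_end (N : nat) (s : seq {perm 'I_N}) (v : vertex N) (p : seq bool)
  : vertex N := foldl (edge_target s) v p.

Definition n_physical (p : seq bool) : nat := count id p.

Definition reachable (N : nat) (s : seq {perm 'I_N}) (a : 'I_N) (t : int)
  (L h : nat) (b : 'I_N) : Prop :=
  exists p : seq bool,
    (path_end s (a, t) p).1 = b /\
    (path_end s (a, t) p).2 - t <= L%:Z /\
    (n_physical p <= h)%N.

Definition k_count (N : nat) (s : seq {perm 'I_N}) (a : 'I_N) (t : int)
  (L h : nat) : nat :=
  #|[set b : 'I_N | (b != a) && `[< reachable s a t L h b >]]|.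

(* Main.v *)
Require Import Defs.
From mathcomp Require Import all_boot all_algebra all_fingroup.
From mathcomp Require Import boolp zify.
Import GRing.Theory Num.Theory.

Lemma binsum_le (L h : nat) : (3 * h <= L)%N ->
  (\sum_(1 <= j < h.+1) 'C(L, j) <= 2 * 'C(L, h))%N.
Proof.
elim: h => [|m IH] Hm; first by rewrite big_geq.
rewrite big_nat_recr //=.
have H1' : (\sum_(1 <= j < m.+1) 'C(L, j) <= 2 * 'C(L, m))%N.
  apply: IH; lia.
have H2 := mul_bin_left L m.
have : (2 * 'C(L, m) <= 'C(L, m.+1))%N.
  have Hp : (2 * 'C(L, m) * m.+1 <= 'C(L, m.+1) * m.+1)%N.
    have -> : ('C(L, m.+1) * m.+1 = (L - m) * 'C(L, m))%N by rewrite mulnC H2.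
    have : (2 * m.+1 <= L - m)%N by lia.
    nia.
  by rewrite leq_pmul2r in Hp.
lia.
Qed.

Lemma path_end_snd N (s : seq {perm 'I_N}) v p :
  ((path_end s v p).2 = v.2 + (size p)%:Z)%R.
Proof.
elim: p v => [|x p IH] v /=; first by rewrite GRing.addr0.
rewrite /path_end /= -/(path_end _ _ _) IH.
have -> : ((edge_target s v x).2 = v.2 + 1)%R by case: x.
lia.
Qed.

Lemma path_end_false N (s : seq {perm 'I_N}) v n :
  (path_end s v (nseq n false)).1 = v.1.
Proof.
elim: n v => [|n IH] v //=.
by rewrite /path_end /= -/(path_end _ _ _) IH.
Qed.

Lemma path_end_pad N (s : seq {perm 'I_N}) v p n :
  (path_end s v (p ++ nseq n false)).1 = (path_end s v p).1.
Proof. by rewrite /path_end foldl_cat -/(path_end _ _ _) path_end_false. Qed.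

Definition Dset L h := [set S : {set 'I_L} | (0 < #|S| <= h)%N].

Lemma card_Dset L h : #|Dset L h| = (\sum_(1 <= j < h.+1) 'C(L, j))%N.
Proof.
elim: h => [|h IH].
  rewrite big_geq // ; apply/eqP; rewrite cards_eq0; apply/eqP/setP => S.
  by rewrite !inE; case: #|S|.
have -> : Dset L h.+1 = Dset L h :|: [set S : {set 'I_L} | #|S| == h.+1].
  apply/setP => S; rewrite !inE; apply/idP/idP; lia.
rewrite cardsU.
have -> : Dset L h :&: [set S : {set 'I_L} | #|S| == h.+1] = set0.
  apply/setP => S; rewrite !inE; apply/negbTE; apply/negP => /andP [/andP[_ H1] /eqP H2].
  lia.
rewrite cards0 subn0 IH card_draws card_ord (@big_nat_recr _ _ _ h.+1) //=.
Qed.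

Theorem lemma3p1 (N : nat) (s : seq {perm 'I_N}) (a : 'I_N) (t : int) (L h : nat) :
  (0 < size s)%N -> (0 < L)%N -> (0 < h)%N -> (3 * h <= L)%N ->
  (k_count s a t L h <= 2 * 'C(L, h))%N.
Proof.
move=> _ HL _ Hh.
pose i0 : 'I_L := Ordinal HL.
pose q (S : {set 'I_L}) := [seq i \in S | i <- enum 'I_L].
pose f (S : {set 'I_L}) := (path_end s (a, t) (q S)).1.
apply: (leq_trans _ (@binsum_le L h Hh)); rewrite -card_Dset.
apply: (leq_trans _ (leq_imset_card f (Dset L h))).
apply: subset_leq_card; apply/subsetP => b; rewrite inE => /andP [nba /asboolP [p [Hb [Hl Hc]]]].
rewrite path_end_snd /= in Hl.
have Hsz : (size p <= L)%N by lia.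
pose pp := p ++ nseq (L - size p) false.
pose S := [set i : 'I_L | nth false pp i].
have Hq : q S = pp.
  apply: (@eq_from_nth _ false).
    by rewrite size_map size_enum_ord size_cat size_nseq; lia.
  move=> i; rewrite size_map size_enum_ord => Hi.
  by rewrite (nth_map i0) ?size_enum_ord // inE nth_enum_ord.
have Hcount : #|S| = count id pp.
  rewrite -Hq /q count_map cardE /enum_mem size_filter.
  rewrite (@eq_filter _ _ predT) // filter_predT; exact: eq_count.
have Hcpp : count id pp = count id p by rewrite count_cat count_nseq /= mul0n addn0.
apply/imsetP; exists S.
  rewrite inE Hcount Hcpp; apply/andP; split; last exact: Hc.
  rewrite lt0n; apply/negP => /eqP Hc0.
  have : pp = nseq L false.
    apply: (@eq_from_nth _ false); first by rewrite size_nseq size_cat size_nseq; lia.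
    move=> i Hi; rewrite nth_nseq.
    have -> : (i < L)%N by move: Hi; rewrite size_cat size_nseq; lia.
    apply/negbTE/negP => Hn.
    have : (0 < count id pp)%N.
      by rewrite -has_count; apply/hasP; exists (nth false pp i) => //; apply: mem_nth.
    by rewrite Hcpp Hc0.
  move=> Hpp; move: nba; rewrite -Hb -(@path_end_pad _ s (a, t) p (L - size p)) -/pp Hpp path_end_false.
  by rewrite eqxx.
by rewrite /f Hq /pp path_end_pad Hb.
Qed.
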